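(* Let $p$ be a prime, $n\ge1$, $\mathbb{F}=\mathbb{F}_{p^n}$, $F=p^n$, and $g:\mathbb{F}\to[0,1]$. Let $k\ge 2$ be an integer, let $n'$ be an integer with $$1+\frac{\log\binom{k}{2}}{\log p}\ \le\ n'\ <\ 2+\frac{\log\binom{k}{2}}{\log p},\qquad n'\le n,$$ and let $S$ be the set of all $\mathbb{F}_p$-subspaces of $\mathbb{F}$ of dimension $n'$. If $\mathbb{E}(g)>8p^{-1/2}k^{-1}$, then when $t\in\mathbb{F}$ and $W\in S$ are chosen independently and uniformly at random, $$\sum_{m\in t+W}g(m)\ \ge\ \mathbb{E}(g)\,|W|/2$$ holds with probability exceeding $3/4$.
   Context: $\mathbb{E}(g)=F^{-1}\sum_{m\in\mathbb{F}}g(m)$. *)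

(* Defs.v *)
From HB Require Import structures.
From mathcomp Require Import all_boot all_order all_algebra all_field.
From mathcomp Require Import reals exp.
Set Implicit Arguments. Unset Strict Implicit. Unset Printing Implicit Defensive.
Import Order.TTheory GRing.Theory Num.Theory.
Local Open Scope ring_scope.

Definition expect (R : realType) (F : finType) (g : F -> R) : R :=
  (#|F|%:R)^-1 * \sum_(m : F) g m.

(* The set of F_p-subspaces of F (F viewed as an F_p-vector space through
   pPrimeCharType) of dimension d, each represented by its set of elements.
   A set A of elements is a subspace iff it coincides with the F_p-span of
   its own elements. *)
Definition Fp_subspaces (F : finFieldType) (p : nat) (hp : p \in [pchar F])
    (d : nat) : {set {set F}} :=
  [set A : {set F} |
     [forall x : F, (x \in A) == (x \in (@span _ (pPrimeCharType hp) (enum A)))]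
     && (\dim (@span _ (pPrimeCharType hp) (enum A)) == d)].

Definition translate (F : finFieldType) (t : F) (W : {set F}) : {set F} :=
  [set t + w | w in W].

Definition prob_tW (R : realType) (F : finType) (S : {set {set F}})
    (P : F -> {set F} -> bool) : R :=
  (#|[set tW in setX [set: F] S | P tW.1 tW.2]|%:R) / ((#|F| * #|S|)%N%:R).

(* Main.v *)
Require Import Defs.
From HB Require Import structures.
From mathcomp Require Import all_boot all_order all_algebra all_field.
From mathcomp Require Import reals exp.
From mathcomp Require Import ring lra.
Set Implicit Arguments. Unset Strict Implicit. Unset Printing Implicit Defensive.
Import Order.TTheory GRing.Theory Num.Theory.
Local Open Scope ring_scope.
Lemma addclosed_mulrn (F : finFieldType) (A : {set F}) :
  0 \in A -> (forall x y, x \in A -> y \in A -> x + y \in A) ->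
  forall x m, x \in A -> x *+ m \in A.
Proof. move=> A0 AD x m xA; elim: m => [|m IH]; first by rewrite mulr0n.
by rewrite mulrS AD. Qed.

Lemma sub_char (F : finFieldType) (p : nat) (hp : p \in [pchar F]) d (A : {set F}) :
  A \in Fp_subspaces hp d <->
  [/\ 0 \in A, (forall x y, x \in A -> y \in A -> x + y \in A) & #|A| = (p ^ d)%N].
Proof.
have pr : prime p := pcharf_prime hp.
set U := (@span _ (pPrimeCharType hp) (enum A)).
have cU := card_vspace U; rewrite card_Fp // in cU.
rewrite inE; split.
  case/andP => /forallP H /eqP dU.
  have eA : forall x, (x \in A) = (x \in U) by move=> x; apply/eqP/H.
  split.
  - rewrite eA; exact: (mem0v U).
  - by move=> x y; rewrite !eA => xU yU; apply: (@memvD _ _ U).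
  - rewrite -dU -cU; apply: eq_card => x.
    by rewrite eA.
case=> A0 AD cA.
have eA : forall x, (x \in A) = (x \in U).
  move=> x; apply/idP/idP => [xA|].
    by apply: memv_span; rewrite mem_enum.
  move=> /coord_span ->.

  apply: (big_ind (fun x : F => x \in A)).
  - exact: A0.
  - move=> a b ha hb; exact: (AD a b ha hb).
  move=> i _; rewrite /GRing.scale /=.
  rewrite /pprimeChar_scale mulr_natl; apply: addclosed_mulrn => //.
  have : (enum A)`_i \in enum A by apply: mem_nth; rewrite -cardE.
  by rewrite mem_enum.
apply/andP; split; first by apply/forallP => x; rewrite eA.
apply/eqP; apply/eqP; rewrite -(@eqn_exp2l p); last by apply: prime_gt1.
rewrite -cA -cU; apply/eqP/eq_card => x.
by rewrite eA.
Qed.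

Lemma S_nonempty (F : finFieldType) (p n n' : nat) (hp : p \in [pchar F]) :
  #|F| = (p ^ n)%N -> (n' <= n)%N -> exists A, A \in Fp_subspaces hp n'.
Proof.
move=> hF hn.
have pr : prime p := pcharf_prime hp.
pose vT := pPrimeCharType hp.
have dimf : \dim (fullv : {vspace vT}) = n.
  have := card_vspace (fullv : {vspace vT}); rewrite card_Fp // card_vspacef.
  move/eqP; rewrite hF eq_sym eqn_exp2l ?prime_gt1 //; by move/eqP.
pose b := vbasis (fullv : {vspace vT}).
have fb : free (take n' b).
  apply: (@catl_free _ _ (drop n' b)); rewrite cat_take_drop.
  exact: basis_free (vbasisP _).
pose U := <<take n' b>>%VS.
have dU : \dim U = n'.
  move: fb; rewrite /free => /eqP ->; rewrite size_take size_tuple dimf.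
  by case: ltngtP hn.
exists [set x : F | x \in U].
apply/sub_char; split.
- by rewrite inE; exact: (mem0v U).
- move=> x y; rewrite !inE => xU yU; exact: (memvD xU yU).
- have := card_vspace U; rewrite card_Fp // dU => <-.
  by apply: eq_card => x; rewrite inE.
Qed.

Lemma scale_sub (F : finFieldType) (p d : nat) (hp : p \in [pchar F]) (c : F) (A : {set F}) :
  c != 0 -> A \in Fp_subspaces hp d -> [set c * x | x in A] \in Fp_subspaces hp d.
Proof.
move=> c0 /sub_char [A0 AD cA]; apply/sub_char; split.
- by apply/imsetP; exists 0 => //; rewrite mulr0.
- move=> x y /imsetP [x' x'A ->] /imsetP [y' y'A ->].
  by apply/imsetP; exists (x' + y'); [exact: AD | rewrite mulrDr].
- by rewrite card_imset //; exact: mulfI.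
Qed.

Lemma scale_inj (F : finFieldType) (c : F) : c != 0 ->
  injective (fun A : {set F} => [set c * x | x in A]).
Proof.
move=> c0 A B /= e.
have K : forall C : {set F}, [set c^-1 * y | y in [set c * x | x in C]] = C.
  move=> C; rewrite -imset_comp; rewrite -[RHS]imset_id; apply: eq_imset => x /=.
  by rewrite mulrA mulVf // mul1r.
by rewrite -(K A) e K.
Qed.

Lemma Ncount (F : finFieldType) (p d : nat) (hp : p \in [pchar F]) (a b : F) :
  a != 0 -> b != 0 ->
  (#|[set W in Fp_subspaces hp d | a \in W]| <= #|[set W in Fp_subspaces hp d | b \in W]|)%N.
Proof.
move=> a0 b0.
have c0 : b / a != 0 by rewrite mulf_neq0 ?invr_eq0.
rewrite -(card_imset _ (scale_inj c0)); apply: subset_leq_card.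
apply/subsetP => W' /imsetP [W]; rewrite inE => /andP [WS aW] ->.
rewrite inE scale_sub //=; apply/imsetP; exists a => //.
by rewrite divfK.
Qed.

Lemma Nsum (F : finFieldType) (p d : nat) (hp : p \in [pchar F]) :
  \sum_(a : F | a != 0) #|[set W in Fp_subspaces hp d | a \in W]| =
  (#|Fp_subspaces hp d| * (p ^ d - 1))%N.
Proof.
set S := Fp_subspaces hp d.
have E1 a : #|[set W in S | a \in W]| = \sum_(W in S) (a \in W : nat).
  rewrite -sum1_card big_mkcond [RHS]big_mkcond /=; apply: eq_bigr => W _.
  by rewrite inE; case: (W \in S); case: (a \in W).
rewrite (eq_bigr _ (fun a _ => E1 a)) exchange_big /=.
rewrite -sum_nat_const; apply: eq_bigr => W WS.
move/sub_char: WS => [W0 _ cW].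
have : \sum_a (a \in W : nat) = #|W|.
  by rewrite -sum1_card [RHS]big_mkcond /=; apply: eq_bigr => a _; case: (a \in W).
rewrite (bigD1 0) //= W0 cW => <-.

by rewrite /= -[(1 + _)%R]/(1 + _)%N add1n subSS subn0.
Qed.

Lemma Nconst (F : finFieldType) (p d : nat) (hp : p \in [pchar F]) (a : F) :
  a != 0 ->
  (#|[set W in Fp_subspaces hp d | a \in W]| * (#|F| - 1))%N =
  (#|Fp_subspaces hp d| * (p ^ d - 1))%N.
Proof.
move=> a0; rewrite -Nsum.
have -> : \sum_(b : F | b != 0) #|[set W in Fp_subspaces hp d | b \in W]| =
          \sum_(b : F | b != 0) #|[set W in Fp_subspaces hp d | a \in W]|.
  apply: eq_bigr => b b0; apply/eqP; rewrite eqn_leq !Ncount //.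
rewrite sum_nat_const cardC1 subn1 mulnC.
done.
Qed.
Lemma qbound (R : realType) (p k n' : nat) : prime p -> (2 <= k)%N ->
  1 + ln ('C(k, 2)%:R : R) / ln (p%:R : R) <= (n'%:R : R) ->
  ((p * 'C(k, 2))%N%:R : R) <= (p ^ n')%N%:R.
Proof.
move=> pr hk h.
have p1 : (1 : R) < p%:R by rewrite ltr1n prime_gt1.
have lp : 0 < ln (p%:R : R) by apply: ln_gt0.
have C1 : (1 <= 'C(k, 2))%N by rewrite bin_gt0.
have Cp : (0 : R) < 'C(k, 2)%:R by rewrite ltr0n.
have pp : (0 : R) < p%:R by apply: lt_trans p1.
have pq : (0 : R) < (p ^ n')%N%:R by rewrite ltr0n expn_gt0 prime_gt0.
have pC : (0 : R) < (p * 'C(k, 2))%N%:R by rewrite natrM mulr_gt0.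
rewrite -ler_ln ?posrE //.
rewrite natrM lnM ?posrE //.
rewrite natrX.
rewrite lnXn //.
rewrite -[X in _ <= X]mulr_natl.
have : (1 + ln ('C(k, 2)%:R : R) / ln (p%:R : R)) * ln (p%:R) <= n'%:R * ln (p%:R).
  by rewrite ler_pM2r.

rewrite mulrDl mul1r divfK ?gt_eqF // (addrC (ln (p%:R : R))).
Qed.

Lemma final_arith (R : realType) (P K C q m sp : R) :
  2 <= K -> 0 < sp -> sp * sp = P -> 2 * C = K * (K - 1) -> P * C <= q ->
  m <= 1 -> 8 / (sp * K) < m -> 16 < q * m.
Proof.
move=> hK hsp hP hC hq hm hlt.
have spK : 0 < sp * K by apply: mulr_gt0 => //; lra.
have h8 : 8 < m * (sp * K) by rewrite -ltr_pdivrMr.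
have m0 : 0 < m by apply: le_lt_trans hlt; apply: divr_ge0 => //; apply: ltW.
have hspK : 8 < sp * K by nra.
have : P * C * m <= q * m by rewrite ler_pM2r.
have eab : 2 * (P * C * m) = (m * (sp * K)) * (sp * (K - 1)).
  rewrite -hP; have -> : 2 * (sp * sp * C * m) = sp * sp * m * (2 * C) by ring.
  by rewrite hC; ring.
have hb : 4 < sp * (K - 1) by nra.
have : 32 < (m * (sp * K)) * (sp * (K - 1)) by nra.
lra.
Qed.
Lemma shift_sum (R : realType) (F : finFieldType) (f : F -> R) (w : F) :
  \sum_t f (t + w) = \sum_t f t.
Proof. by rewrite [RHS](reindex_inj (addIr w)). Qed.

Lemma trans_eq (F : finFieldType) (W : {set F}) (w : F) :
  (forall x y, x \in W -> y \in W -> x + y \in W) -> w \in W ->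
  [set x + w | x in W] = W.
Proof.
move=> AD wW; apply/eqP; rewrite eqEcard card_imset ?leqnn ?andbT; last exact: addIr.
by apply/subsetP => y /imsetP [x xW ->]; apply: AD.
Qed.

Lemma sum_trans (R : realType) (F : finFieldType) (W : {set F}) (w : F) (f : F -> R) :
  (forall x y, x \in W -> y \in W -> x + y \in W) -> w \in W ->
  \sum_(x in W) f (x - w) = \sum_(d in W) f d.
Proof.
move=> AD wW; rewrite -[in LHS](trans_eq AD wW) big_imset /=.
  by apply: eq_bigr => x _; rewrite addrK.
by move=> x y _ _; apply: addIr.
Qed.

Definition Av (R : realType) (F : finFieldType) (g : F -> R) (d : F) : R :=
  \sum_t g t * g (t + d).

Lemma sumX (R : realType) (F : finFieldType) (g : F -> R) (W : {set F}) :
  \sum_t \sum_(w in W) g (t + w) = #|W|%:R * \sum_t g t.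
Proof.
rewrite exchange_big /= (eq_bigr (fun _ => \sum_t g t)); last by move=> w _; apply: shift_sum.
by rewrite sumr_const mulr_natl.
Qed.

Lemma sumX2 (R : realType) (F : finFieldType) (g : F -> R) (W : {set F}) :
  (forall x y, x \in W -> y \in W -> x + y \in W) ->
  \sum_t (\sum_(w in W) g (t + w)) ^+ 2 = #|W|%:R * \sum_(d in W) Av g d.
Proof.
move=> AD.
under eq_bigr do rewrite expr2 big_distrlr /=.
rewrite exchange_big /=.
under eq_bigr do rewrite exchange_big /=.
rewrite (eq_bigr (fun _ => \sum_(d in W) Av g d)) ?sumr_const ?mulr_natl //.
move=> w wW.
rewrite -(sum_trans (Av g) AD wW); apply: eq_bigr => w' _.
rewrite /Av (reindex_inj (addIr (- w))) /=; apply: eq_bigr => t _.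
by congr (g _ * g _); ring.
Qed.

Lemma sumS (R : realType) (F : finFieldType) (p d : nat) (hp : p \in [pchar F]) (g : F -> R) :
  \sum_(W in Fp_subspaces hp d) \sum_(x in W) Av g x =
  #|Fp_subspaces hp d|%:R * Av g 0 +
  #|[set W in Fp_subspaces hp d | 1 \in W]|%:R * (\sum_x Av g x - Av g 0).
Proof.
set S := Fp_subspaces hp d.
set N0 := #|[set W in S | 1 \in W]|.
have e1 : forall W, W \in S -> \sum_(x in W) Av g x =
    Av g 0 + \sum_(x | x != 0) (if x \in W then Av g x else 0).
  move=> W /sub_char [W0 _ _]; rewrite (bigD1 0) //=; congr (_ + _).
  by rewrite [RHS]big_mkcond [LHS]big_mkcond /=; apply: eq_bigr => x _; case: (x \in W); case: (x != 0).
rewrite (eq_bigr _ e1) big_split /= sumr_const mulr_natl; congr (_ + _).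
rewrite exchange_big /= [X in _ * (X - _)](bigD1 0) //= addrC addrK mulr_sumr.
apply: eq_bigr => x x0.
rewrite -big_mkcondr /=.
have -> : \sum_(W in S | x \in W) Av g x = #|[set W in S | x \in W]|%:R * Av g x.
  rewrite mulr_natl -sumr_const; apply: eq_bigl => W; by rewrite inE.
congr (_ * _); congr (_%:R); apply/eqP; rewrite eqn_leq !Ncount // ?oner_eq0.
all: done.
Qed.

Lemma sumAv (R : realType) (F : finFieldType) (g : F -> R) :
  \sum_x Av g x = (\sum_t g t) ^+ 2.
Proof.
rewrite /Av exchange_big /= expr2 mulr_suml; apply: eq_bigr => t _.
rewrite -mulr_sumr; congr (_ * _).
by rewrite [RHS](reindex_inj (addrI t)).
Qed.

Lemma N0le (F : finFieldType) (p d : nat) (hp : p \in [pchar F]) :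
  (#|[set W in Fp_subspaces hp d | (1%R : F) \in W]| * #|F| <= #|Fp_subspaces hp d| * p ^ d)%N.
Proof.
have h := @Nconst F p d hp 1 (oner_neq0 F).
have hle : (#|[set W in Fp_subspaces hp d | (1%R : F) \in W]| <= #|Fp_subspaces hp d|)%N.
  by apply: subset_leq_card; apply/subsetP => W; rewrite inE => /andP [].
have F0 : (0 < #|F|)%N by apply/card_gt0P; exists 0.
have q0 : (0 < p ^ d)%N by rewrite expn_gt0 prime_gt0 // (pcharf_prime hp).
move: h hle F0 q0.
set a := #|[set W in _ | _]|; set b := #|Fp_subspaces _ _|; set c := #|F|; set e := (p ^ d)%N.
move=> h hle F0 q0.
have -> : c = (c - 1 + 1)%N by rewrite subnK.
have -> : e = (e - 1 + 1)%N by rewrite subnK.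
by rewrite !mulnDr !muln1 h leq_add2l.
Qed.

Theorem lemma2 (R : realType) (p n : nat) (F : finFieldType)
    (hprime : prime p) (hn : (1 <= n)%N) (hp : p \in [pchar F])
    (hcard : #|F| = (p ^ n)%N)
    (g : F -> R) (hg : forall m, 0 <= g m <= 1)
    (k n' : nat) (hk : (2 <= k)%N)
    (hn'lo : 1 + ln ('C(k, 2)%:R : R) / ln (p%:R : R) <= (n'%:R : R))
    (hn'hi : (n'%:R : R) < 2 + ln ('C(k, 2)%:R : R) / ln (p%:R : R))
    (hn'n : (n' <= n)%N) :
  expect g > 8 / (Num.sqrt (p%:R : R) * k%:R) ->
  prob_tW R (Fp_subspaces hp n')
    (fun t W => \sum_(m in translate t W) g m >= expect g * #|W|%:R / 2)
  > 3 / 4.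
Proof.
move=> hE.
set S := Fp_subspaces hp n'.
set q := (p ^ n')%N.
set M := \sum_t g t.
set s := #|S|.
set N0 := #|[set W in S | (1%R : F) \in W]|.
set m := expect g.
have Fc0 : (0 < #|F|)%N by apply/card_gt0P; exists 0.
have FcR : (0 : R) < #|F|%:R by rewrite ltr0n.
have mM : #|F|%:R * m = M by rewrite /m /expect mulrA mulfV ?gt_eqF // mul1r.
have s0 : (0 < s)%N.
  have [A AS] := S_nonempty hp hcard hn'n; by apply/card_gt0P; exists A.
have sR : (0 : R) < s%:R by rewrite ltr0n.
have cardW : forall W, W \in S -> #|W| = q by move=> W /sub_char [].
have ADW : forall W, W \in S -> forall x y, x \in W -> y \in W -> x + y \in W.
  by move=> W /sub_char [].
have N0R : N0%:R * #|F|%:R <= s%:R * q%:R :> R by rewrite -!natrM ler_nat N0le.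
have N0s : N0%:R <= s%:R :> R.
  by rewrite ler_nat; apply: subset_leq_card; apply/subsetP => W; rewrite inE => /andP [].
have M0 : 0 <= M by apply: sumr_ge0 => t _; case/andP: (hg t).
have MF : M <= #|F|%:R.
  have -> : (#|F|%:R : R) = \sum_(t : F) 1 by rewrite sumr_const.
  by apply: ler_sum => t _; case/andP: (hg t).
have sp0 : (0 : R) < Num.sqrt (p%:R : R) by rewrite sqrtr_gt0 ltr0n prime_gt0.
have m0 : 0 < m.
  apply: lt_trans hE; apply: divr_gt0 => //; apply: mulr_gt0 => //.
  by rewrite ltr0n; apply: leq_trans hk.
have m1 : m <= 1.
  by rewrite -(ler_pM2l FcR) mulr1 mM.
have A0b : 0 <= Av g 0 <= M.
  apply/andP; split; first by apply: sumr_ge0 => t _; rewrite addr0; apply: mulr_ge0; case/andP: (hg t).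
  apply: ler_sum => t _; rewrite addr0; case/andP: (hg t) => h0 h1.
  by rewrite -[X in _ <= X]mulr1 ler_wpM2l.
have qm16 : 16 < q%:R * m.
  apply: (@final_arith R p%:R k%:R 'C(k, 2)%:R q%:R m (Num.sqrt p%:R)) => //.
  - by rewrite ler_nat.
  - by rewrite -expr2 sqr_sqrtr // ler0n.
  - have := mul_bin_diag k 1; rewrite bin1 => e.
    by rewrite -natrM -e natrM -subn1 natrB ?(leq_trans _ hk).
  - by rewrite -natrM; apply: qbound.
have perW : forall W, W \in S ->
    \sum_t (\sum_(w in W) g (t + w) - q%:R * m) ^+ 2 =
    q%:R * \sum_(d in W) Av g d - q%:R * q%:R * m * M.
  move=> W WS.
  have e : forall t, (\sum_(w in W) g (t + w) - q%:R * m) ^+ 2 =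
     (\sum_(w in W) g (t + w)) ^+ 2 + (- (2 * (q%:R * m)) * \sum_(w in W) g (t + w) + (q%:R * m) ^+ 2).
    by move=> t; ring.
  rewrite (eq_bigr _ (fun t _ => e t)) big_split big_split /= -mulr_sumr sumr_const.
  rewrite sumX2; last exact: ADW.
  rewrite (sumX g W) cardW // -/M -[_ *+ #|_|]mulr_natl.
  rewrite -mM (_ : #|xpredT| = #|F|) //.
  move: (\sum_(d in W) Av g d) (q%:R : R) (#|F|%:R : R) => z a b; ring.
have Veq : \sum_(W in S) \sum_t (\sum_(w in W) g (t + w) - q%:R * m) ^+ 2 =
    q%:R * (s%:R * Av g 0 + N0%:R * (M ^+ 2 - Av g 0)) - s%:R * (q%:R * q%:R * m * M).
  rewrite (eq_bigr _ perW) sumrB -mulr_sumr sumS sumAv sumr_const -[_ *+ #|S|]mulr_natl.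
  rewrite -/S -/s -/N0 -/M; ring.
have Vle : \sum_(W in S) \sum_t (\sum_(w in W) g (t + w) - q%:R * m) ^+ 2 <=
    q%:R * s%:R * M.
  rewrite Veq.
  have mM0 : 0 <= m * M by apply: mulr_ge0 => //; apply: ltW.
  have h1 : N0%:R * #|F|%:R * (m * M) <= s%:R * q%:R * (m * M) by apply: ler_wpM2r.
  have e : N0%:R * M ^+ 2 = N0%:R * #|F|%:R * (m * M) by rewrite -mM; ring.
  have N00 : (0 : R) <= N0%:R by apply: ler0n.
  have q0 : (0 : R) <= q%:R by apply: ler0n.
  case/andP: A0b => a0 a1.
  have h2 : N0%:R * Av g 0 >= 0 by apply: mulr_ge0.
  have h3 : s%:R * Av g 0 <= s%:R * M by apply: ler_wpM2l => //; apply: ltW.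
  have h4 : s%:R * Av g 0 + N0%:R * (M ^+ 2 - Av g 0) <= s%:R * M + s%:R * q%:R * (m * M).
    rewrite mulrBr e; lra.
  have h5 := ler_wpM2l q0 h4.
  move: h5; set z := s%:R * Av g 0 + _ => h5.
  have e2 : q%:R * (s%:R * M + s%:R * q%:R * (m * M)) = q%:R * s%:R * M + s%:R * (q%:R * q%:R * m * M) by ring.
  lra.
rewrite /prob_tW.
set A := setX [set: F] S.
set Bp := [set tW : F * {set F} | m * #|tW.2|%:R / 2 <= \sum_(x in translate tW.1 tW.2) g x].
rewrite (_ : [set tW in A | _] = A :&: Bp); last by apply/setP => x; rewrite !inE.
have hcards := cardsID Bp A.
rewrite cardsX cardsT -/s in hcards.
set f := fun x : F * {set F} => (\sum_(w in x.2) g (x.1 + w) - q%:R * m) ^+ 2.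
have hA : \sum_(x in A) f x = \sum_(W in S) \sum_t (\sum_(w in W) g (t + w) - q%:R * m) ^+ 2.
  rewrite exchange_big pair_big /=; apply: eq_big => [[t W]|[t W] _] //=.
  by rewrite !inE.
have hB : #|A :\: Bp|%:R * (q%:R * m / 2) ^+ 2 <= \sum_(x in A :\: Bp) f x.
  rewrite [X in X <= _]mulr_natl -sumr_const; apply: ler_sum => -[t W]; rewrite in_setD in_setX /= => /andP [hnP /andP [_ WS]].
  rewrite inE /= in hnP.
  have eX : \sum_(x in translate t W) g x = \sum_(w in W) g (t + w).
    by rewrite /translate big_imset //= => x y _ _; apply: addrI.
  have hX : \sum_(w in W) g (t + w) < m * q%:R / 2.
    by rewrite -eX -(cardW W WS) ltNge.
  rewrite /f /=.
  have mq0 : 0 < q%:R * m by lra.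
  have : q%:R * m / 2 < q%:R * m - \sum_(w in W) g (t + w) by lra.
  move: (\sum_(w in W) g (t + w)) => X h.
  have h0 : 0 <= q%:R * m / 2 by lra.
  rewrite -[X in _ <= X]sqrrN opprB; rewrite ler_sqr ?nnegrE; lra.
have hB2 : \sum_(x in A :\: Bp) f x <= \sum_(x in A) f x.
  rewrite [X in _ <= X](big_setID Bp) /= lerDr.
  by apply: sumr_ge0 => x _; apply: sqr_ge0.
rewrite hA in hB2.
have hb := le_trans hB (le_trans hB2 Vle).
move: hcards hb; set G := #|A :&: Bp|; set b := #|A :\: Bp| => hcards hb.
have hsF : (0 : R) < (#|F| * s)%N%:R by rewrite ltr0n muln_gt0 Fc0 s0.
rewrite ltr_pdivlMr // -hcards natrD.
rewrite -hcards natrD in hsF.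
have b0 : (0 : R) <= b%:R by apply: ler0n.
have G0 : (0 : R) <= G%:R by apply: ler0n.
have e : q%:R * s%:R * M = (q%:R * m) * (#|F| * s)%N%:R by rewrite -mM natrM; ring.
rewrite e -hcards natrD in hb.
move: qm16 hb b0 hsF; move: (q%:R * m) (G%:R : R) => a x.
have [-> | bpos] := posnP b.
  move=> *; lra.
have yb : (0 : R) < b%:R by rewrite ltr0n.
move: (b%:R : R) yb => y yb a16 hb _ hsF.
have a0 : 0 < a by lra.
have h1 : y * a / 4 <= x + y.
  have e3 : y * (a / 2) ^+ 2 = a * (y * a / 4) by rewrite expr2; field.
  by rewrite e3 ler_pM2l in hb.
have h2 : 0 < y * (a - 16) by apply: mulr_gt0; lra.
lra.
Qed.
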